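(* Let $n,r\ge3$, let $h$ be a hermitian form on $\mathbb{C}^n$ of signature $(n-1,1)$, and let $x=(L_1,\dots,L_r)$ be an $r$-tuple of $h$-isotropic lines in $\mathbb{C}^n$. Then: (1) $x$ is semi-stable if and only if for every isotropic line $L$ one has $\#\{i: L=L_i\}\le r/2$; (2) if $r$ is even, then $x$ is semi-stable if and only if there is a derangement $\sigma$ of $\{1,\dots,r\}$ of order $2$ such that $s_\sigma(x)\neq0$.
   Context: $x$ is called semi-stable if the $r$-tuple of flags $(L_i,L_i^\perp)_{i=1,\dots,r}$ (line contained in hyperplane, $L^\perp$ the $h$-orthogonal) is semi-stable for the diagonal action of $\mathrm{SL}_n(\mathbb{C})$ on the $r$-th power of the variety of line-hyperplane flags, linearized by the embedding $(L_i,H_i)\mapsto(L_i,H_i^\perp)$ into $(\mathbb{P}(\mathbb{C}^n)\times\mathbb{P}((\mathbb{C}^n)^\vee))^r$ with line bundle $\bigotimes_i\mathrm{pr}_i^*(\mathcal{O}(1)\boxtimes\mathcal{O}(1))$ (i.e. some invariant section of a positive tensor power does not vanish). For a derangement (fixed-point-free permutation) $\sigma$, $s_\sigma(x)=\prod_{i=1}^r h(v_i,v_{\sigma(i)})$, where $v_i$ generates $L_i$ (its vanishing does not depend on the choice). *)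

(* Defs.v *)
From HB Require Import structures.
From mathcomp Require Import all_boot all_order all_algebra all_fingroup.
From mathcomp Require Import mpoly.
Set Implicit Arguments. Unset Strict Implicit. Unset Printing Implicit Defensive.
Import Order.TTheory GRing.Theory Num.Theory.
Local Open Scope ring_scope.

Section Defs.
Variables (C : numClosedFieldType) (n r : nat).

Definition conjmx p q (A : 'M[C]_(p, q)) : 'M[C]_(p, q) := map_mx Num.conj A.

(* hermitian form with Gram matrix H, conjugate-linear in the first argument:
   h(u, v) = conj(u) H v^T  (vectors of C^n as row vectors) *)
Definition hform (H : 'M[C]_n) (u v : 'rV[C]_n) : C := (conjmx u *m H *m v^T) 0 0.

(* H is hermitian of signature (n-1, 1): there is an invertible P with
   P^* H P = diag(1, ..., 1, -1) (Sylvester normal form) *)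
Definition hermitian_sig_n1_1 (H : 'M[C]_n) : Prop :=
  (conjmx H)^T = H /\
  exists2 P : 'M[C]_n, P \in unitmx &
    (conjmx P)^T *m H *m P = diag_mx (\row_(i < n) (if val i == n.-1 then -1 else 1)).

Definition isotropic (H : 'M[C]_n) (u : 'rV[C]_n) : Prop := hform H u u = 0.

(* The line L_i spanned by v i is sent to the point ([v_i], [w_i]) of
   P(C^n) x P((C^n)^v), where w_i is the linear form x |-> h(v_i, x), whose
   kernel is L_i^perp (i.e. [w_i] = annihilator of the hyperplane L_i^perp).
   A linear form is encoded by its row of coefficients: w(x) = w *m x^T. *)
Definition dual_pt (H : 'M[C]_n) (u : 'rV[C]_n) : 'rV[C]_n := conjmx u *m H.

(* coordinates on (C^n x (C^n)^v)^r: the first r*n variables are the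
   coordinates of v_1..v_r, the last r*n those of w_1..w_r *)
Definition NV := (r * n + r * n)%N.

Definition env (v w : 'I_r -> 'rV[C]_n) : 'I_NV -> C :=
  fun k => match split k with
           | inl a => mxvec (\matrix_(i < r, j < n) v i 0 j) 0 a
           | inr b => mxvec (\matrix_(i < r, j < n) w i 0 j) 0 b
           end.

Definition vidx (i : 'I_r) (j : 'I_n) : 'I_NV := lshift (r * n) (mxvec_index i j).
Definition widx (i : 'I_r) (j : 'I_n) : 'I_NV := rshift (r * n) (mxvec_index i j).

(* F is a section of (O(k) ⊠ O(k))^{⊠ r}: multihomogeneous of degree k in
   each v_i and of degree k in each w_i *)
Definition multihom (k : nat) (F : {mpoly C[NV]}) : Prop :=
  forall m : 'X_{1..NV}, m \in msupp F ->
    forall i : 'I_r, (\sum_(j < n) m (vidx i j) = k)%N /\ (\sum_(j < n) m (widx i j) = k)%N.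

(* SL_n-invariance for the diagonal action g.(v, w) = (g v, w o g^-1) *)
Definition SL_invariant (F : {mpoly C[NV]}) : Prop :=
  forall g : 'M[C]_n, \det g = 1 ->
    forall v w : 'I_r -> 'rV[C]_n,
      F.@[env (fun i => v i *m g^T) (fun i => w i *m invmx g)] = F.@[env v w].

Definition semistable (H : 'M[C]_n) (v : 'I_r -> 'rV[C]_n) : Prop :=
  exists k : nat, (0 < k)%N /\ exists F : {mpoly C[NV]},
    multihom k F /\ SL_invariant F /\ F.@[env v (fun i => dual_pt H (v i))] != 0.

Definition derangement (s : {perm 'I_r}) : Prop := forall i, s i != i.

Definition s_sigma (H : 'M[C]_n) (v : 'I_r -> 'rV[C]_n) (s : {perm 'I_r}) : C :=
  \prod_(i < r) hform H (v i) (v (s i)).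

End Defs.

(* Main.v *)
From Pilot Require Import Defs.
From HB Require Import structures.
From mathcomp Require Import all_boot all_order all_algebra all_fingroup.
From mathcomp Require Import mpoly.
From mathcomp Require Import cyclic ring zify.
Import Order.TTheory GRing.Theory Num.Theory.
Local Open Scope ring_scope.
Set Implicit Arguments. Unset Strict Implicit. Unset Printing Implicit Defensive.


Section Basics.
Variables (C : numClosedFieldType) (n r : nat).

Lemma env_vidx (v w : 'I_r -> 'rV[C]_n) i j : env v w (vidx i j) = v i 0 j.
Proof. by rewrite /env /vidx (unsplitK (inl _)) mxvecE mxE. Qed.

Lemma env_widx (v w : 'I_r -> 'rV[C]_n) i j : env v w (widx i j) = w i 0 j.
Proof. by rewrite /env /widx (unsplitK (inr _)) mxvecE mxE. Qed.

Lemma idxP (k : 'I_(NV n r)) :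
  (exists i j, k = vidx i j) \/ (exists i j, k = widx i j).
Proof.
rewrite -(splitK k); case: (split k) => [a|b].
  by left; case/mxvec_indexP: a => i j; exists i, j.
by right; case/mxvec_indexP: b => i j; exists i, j.
Qed.

Lemma mxvec_index_inj (i i' : 'I_r) (j j' : 'I_n) :
  (mxvec_index i j == mxvec_index i' j') = ((i, j) == (i', j')).
Proof.
apply/eqP/eqP => [|[-> ->]] //.
by move/cast_ord_inj/enum_rank_inj.
Qed.

Lemma vidx_eq i j i' j' : (@vidx n r i j == vidx i' j') = ((i == i') && (j == j')).
Proof. by rewrite /vidx eq_shift mxvec_index_inj xpair_eqE. Qed.
Lemma widx_eq i j i' j' : (@widx n r i j == widx i' j') = ((i == i') && (j == j')).
Proof. by rewrite /widx eq_shift mxvec_index_inj xpair_eqE. Qed.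
Lemma vwidx_eq i j i' j' : (@vidx n r i j == widx i' j') = false.
Proof. by rewrite /vidx /widx eq_shift. Qed.
Lemma wvidx_eq i j i' j' : (@widx n r i j == vidx i' j') = false.
Proof. by rewrite /vidx /widx eq_shift. Qed.

Lemma env_ext (v v' w w' : 'I_r -> 'rV[C]_n) :
  (forall i, v i = v' i) -> (forall i, w i = w' i) -> env v w =1 env v' w'.
Proof.
move=> hv hw k; case: (idxP k) => [[i [j ->]]|[i [j ->]]].
  by rewrite !env_vidx hv.
by rewrite !env_widx hw.
Qed.

Lemma prod_NV (R : comRingType) (f : 'I_(NV n r) -> R) :
  \prod_k f k = \prod_i ((\prod_j f (vidx i j)) * (\prod_j f (widx i j))).
Proof.
rewrite big_split /= [LHS](big_split_ord _ xpredT) /=.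
congr (_ * _).
  rewrite (reindex (uncurry (@mxvec_index r n))) /=; last first.
    by apply: subon_bij (curry_mxvec_bij r n).
  by rewrite pair_bigA; apply: eq_bigr => -[i j].
rewrite (reindex (uncurry (@mxvec_index r n))) /=; last first.
  by apply: subon_bij (curry_mxvec_bij r n).
by rewrite pair_bigA; apply: eq_bigr => -[i j].
Qed.


Lemma scale_hom k (F : {mpoly C[NV n r]}) (hF : multihom k F) (la mu : 'I_r -> C)
  (v w v' w' : 'I_r -> 'rV[C]_n) :
  (forall i, v' i = la i *: v i) -> (forall i, w' i = mu i *: w i) ->
  F.@[env v' w'] = \prod_i (la i * mu i) ^+ k * F.@[env v w].
Proof.
move=> hv hw; rewrite !mevalE big_distrr /=; apply: eq_big_seq => m hm.
rewrite mulrCA; congr (_ * _).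
pose s := env (fun i => const_mx (la i) : 'rV[C]_n) (fun i => const_mx (mu i)).
have -> : \prod_kk env v' w' kk ^+ m kk =
   \prod_kk (s kk ^+ m kk) * \prod_kk env v w kk ^+ m kk.
  rewrite -big_split; apply: eq_bigr => kk _ /=; rewrite -exprMn; congr (_ ^+ _).
  case: (idxP kk) => [[i [j ->]]|[i [j ->]]].
    by rewrite /s !env_vidx hv !mxE.
  by rewrite /s !env_widx hw !mxE.
congr (_ * _); rewrite prod_NV; apply: eq_bigr => i _.
have [h1 h2] := hF m hm i.
rewrite exprMn; congr (_ * _).
  under eq_bigr do rewrite /s env_vidx mxE.
  by rewrite prodrXr h1.
under eq_bigr do rewrite /s env_widx mxE.
by rewrite prodrXr h2.
Qed.


Lemma GL_inv k (F : {mpoly C[NV n r]}) (hF : multihom k F) (hI : SL_invariant F)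
  (n_gt0 : (0 < n)%N) (g g' : 'M[C]_n) : g *m g' = 1%:M ->
  forall v w, F.@[env (fun i => v i *m g^T) (fun i => w i *m g')] = F.@[env v w].
Proof.
move=> hgg' v w.
have [ug _] := mulmx1_unit hgg'.
have ig : invmx g = g'.
  by rewrite -[invmx g]mulmx1 -hgg' mulmxA mulVmx // mul1mx.
have dg : \det g != 0 by rewrite -unitfE -unitmxE.
pose c := n.-root ((\det g)^-1).
have hc : c ^+ n = (\det g)^-1 by rewrite rootCK.
have c0 : c != 0.
  apply/eqP => c0; move: hc; rewrite c0 expr0n eqn0Ngt n_gt0 /= => /esym/eqP.
  by rewrite invr_eq0 (negbTE dg).
have dg2 : \det (c *: g) = 1 by rewrite detZ hc mulVf.
have ug2 : c *: g \in unitmx by rewrite unitmxE dg2 unitr1.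
rewrite -(hI (c *: g) dg2 v w) invmxZ // ig.
rewrite (@scale_hom k F hF (fun _ => c) (fun _ => c^-1)
   (fun i => v i *m g^T) (fun i => w i *m g') (fun i => v i *m (c *: g)^T)
   (fun i => w i *m (c^-1 *: g'))).
- by rewrite divff // expr1n big1 ?mul1r.
- by move=> i; rewrite linearZ /= scalemxAr.
- by move=> i; rewrite scalemxAr.
Qed.


Notation cmx := Pilot.Defs.conjmx.
Section HForm.
Implicit Types (H : 'M[C]_n) (u w x z : 'rV[C]_n).

Lemma conjmxZ p q c (A : 'M[C]_(p, q)) : cmx (c *: A) = c^* *: cmx A.
Proof. by rewrite /Defs.conjmx map_mxZ. Qed.
Lemma conjmxD p q (A B : 'M[C]_(p, q)) : cmx (A + B) = cmx A + cmx B.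
Proof. by rewrite /Defs.conjmx map_mxD. Qed.
Lemma conjmxB p q (A B : 'M[C]_(p, q)) : cmx (A - B) = cmx A - cmx B.
Proof. by rewrite /Defs.conjmx map_mxB. Qed.
Lemma conjmxM p q s (A : 'M[C]_(p, q)) (B : 'M[C]_(q, s)) :
  cmx (A *m B) = cmx A *m cmx B.
Proof. by rewrite /Defs.conjmx map_mxM. Qed.
Lemma conjmxT p q (A : 'M[C]_(p, q)) : cmx A^T = (cmx A)^T.
Proof. by rewrite /Defs.conjmx map_trmx. Qed.
Lemma conjmxK p q (A : 'M[C]_(p, q)) : cmx (cmx A) = A.
Proof. by apply/matrixP => i j; rewrite !mxE conjCK. Qed.
Lemma conjmx_eq0 p q (A : 'M[C]_(p, q)) : (cmx A == 0) = (A == 0).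
Proof.
apply/eqP/eqP => [h|->]; last by apply/matrixP => i j; rewrite !mxE conjC0.
by rewrite -[A]conjmxK h; apply/matrixP => i j; rewrite !mxE conjC0.
Qed.

Lemma hformZr H u w c : hform H u (c *: w) = c * hform H u w.
Proof. by rewrite /hform linearZ /= -scalemxAr !mxE. Qed.
Lemma hformZl H u w c : hform H (c *: u) w = c^* * hform H u w.
Proof. by rewrite /hform conjmxZ -!scalemxAl !mxE. Qed.
Lemma hformDr H u w w' : hform H u (w + w') = hform H u w + hform H u w'.
Proof. by rewrite /hform linearD /= mulmxDr !mxE. Qed.
Lemma hformBr H u w w' : hform H u (w - w') = hform H u w - hform H u w'.
Proof. by rewrite /hform linearB /= mulmxBr !mxE. Qed.
Lemma hformBl H u u' w : hform H (u - u') w = hform H u w - hform H u' w.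
Proof. by rewrite /hform conjmxB !mulmxBl !mxE. Qed.

Lemma hform_sym H u w : (cmx H)^T = H -> hform H w u = (hform H u w)^*.
Proof.
move=> hH; rewrite /hform.
have -> : (hform H u w)^* = (cmx (cmx u *m H *m w^T)) 0 0 by rewrite mxE.
rewrite !conjmxM conjmxK conjmxT.
have tr11 (M : 'M[C]_1) : M 0 0 = M^T 0 0 by rewrite mxE.
by rewrite [RHS]tr11 !trmx_mul trmxK hH mulmxA.
Qed.

Lemma hform_change H (P : 'M[C]_n) x z :
  hform H (x *m P^T) (z *m P^T) = hform ((cmx P)^T *m H *m P) x z.
Proof.
rewrite /hform conjmxM conjmxT trmx_mul trmxK.
by rewrite !mulmxA.
Qed.

Lemma hform_diag (d : 'rV[C]_n) x z :
  hform (diag_mx d) x z = \sum_j (x 0 j)^* * d 0 j * z 0 j.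
Proof. by rewrite /hform mul_mx_diag mxE; apply: eq_bigr => j _; rewrite !mxE. Qed.

End HForm.


Section Sig.
Variable (n_gt0 : (0 < n)%N).
Let hN : (n.-1 < n)%N. Proof. by rewrite ltn_predL. Qed.
Let N : 'I_n := Ordinal hN.
Hypothesis dummy : True.
Definition Dsig : 'M[C]_n := diag_mx (\row_(i < n) (if val i == n.-1 then -1 else 1)).

Lemma Dsig_iso0 x : hform Dsig x x = 0 -> x 0 N = 0 -> x = 0.
Proof.
move=> hx xN; rewrite hform_diag (bigD1 N) //= xN conjC0 !mul0r add0r in hx.
have h0 : forall j, j != N -> (x 0 j)^* * (\row_(i < n) (if val i == n.-1 then -1 else 1)) 0 j * x 0 j = (x 0 j)^* * x 0 j.
  move=> j hj; rewrite mxE ifN ?mulr1 //.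
rewrite (eq_bigr _ h0) in hx.
apply/rowP => j; rewrite mxE.
have [->|hj] := eqVneq j N; first by [].
have hge : forall i, i != N -> 0 <= (x 0 i)^* * x 0 i.
  by move=> i _; rewrite mulrC mul_conjC_ge0.
have := psumr_eq0P hge hx hj.
by rewrite mulrC => /eqP; rewrite mul_conjC_eq0 => /eqP.
Qed.

Lemma iso_orth (H : 'M[C]_n) : hermitian_sig_n1_1 H -> forall u w : 'rV[C]_n, u != 0 -> w != 0 ->
  isotropic H u -> isotropic H w -> hform H u w = 0 -> exists2 c, c != 0 & w = c *: u.
Proof.
case=> hH [P uP hP] u w u0 w0 iu iw uw.
pose x := u *m (invmx P)^T; pose z := w *m (invmx P)^T.
have eT : forall y : 'rV[C]_n, y *m (invmx P)^T *m P^T = y.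
  by move=> y; rewrite -mulmxA -trmx_mul mulmxV // trmx1 mulmx1.
have hD : forall y y', hform H (y *m P^T) (y' *m P^T) = hform Dsig y y'.
  by move=> y y'; rewrite hform_change hP.
have ux : u = x *m P^T by rewrite eT.
have wz : w = z *m P^T by rewrite eT.
clearbody x z.
have ixx : hform Dsig x x = 0 by rewrite -hD -ux.
have izz : hform Dsig z z = 0 by rewrite -hD -wz.
have ixz : hform Dsig x z = 0 by rewrite -hD -ux -wz.
have izx : hform Dsig z x = 0 by rewrite -hD -ux -wz hform_sym // uw conjC0.
have xN : x 0 N != 0.
  by apply: contra u0 => /eqP xN; rewrite ux (Dsig_iso0 ixx xN) mul0mx.
pose c := z 0 N / x 0 N.
have y0 : z - c *: x = 0.
  apply: Dsig_iso0.
    rewrite hformBl !hformBr !hformZl !hformZr ixx izz ixz izx.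
    by rewrite !mulr0 !subr0.
  by rewrite !mxE /c divfK // subrr.
have zc : z = c *: x by apply/eqP; rewrite -subr_eq0 y0.
exists c.
  by apply: contra w0 => /eqP c0; rewrite wz zc c0 scale0r mul0mx.
by rewrite wz zc -scalemxAl -ux.
Qed.

End Sig.

End Basics.


Section Comb.
Variables (r : nat) (e : rel 'I_r).
Hypotheses (e_refl : reflexive e) (e_sym : ssrbool.symmetric e) (e_trans : transitive e).
Hypothesis hcard : forall i, (2 * #|[set j | e i j]| <= r)%N.

Definition key (i : 'I_r) : nat := val (odflt i [pick j | e i j]).

Lemma keyP i : e i (odflt i [pick j | e i j]).
Proof. by case: pickP => [j //|/(_ i)]; rewrite e_refl. Qed.

Lemma key_eq i j : e i j -> key i = key j.
Proof.
move=> hij; rewrite /key.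
have -> : [pick k | e i k] = [pick k | e j k].
  apply: eq_pick => k; apply/idP/idP => h.
    by apply: e_trans h; rewrite e_sym.
  exact: e_trans hij h.
case: pickP => //= /(_ j); by rewrite e_refl.
Qed.

Lemma key_eqP i j : key i = key j -> e i j.
Proof.
move=> /val_inj hk.
have h1 := keyP i; have h2 := keyP j.
rewrite hk in h1.
by apply: (e_trans h1); rewrite e_sym.
Qed.


Definition leK (a b : 'I_r) := (key a <= key b)%N.
Definition s0 := sort leK (enum 'I_r).
Lemma s0_uniq : uniq s0. Proof. by rewrite sort_uniq enum_uniq. Qed.
Lemma s0_size : size s0 = r. Proof. by rewrite size_sort size_enum_ord. Qed.
Lemma mem_s0 i : i \in s0. Proof. by rewrite mem_sort mem_enum. Qed.
Lemma s0_sorted : sorted leK s0.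
Proof. by apply: sort_sorted => a b; rewrite /leK leq_total. Qed.
Lemma leK_trans : transitive leK. Proof. by move=> a b c; rewrite /leK; apply: leq_trans. Qed.
Lemma leK_refl : reflexive leK. Proof. by move=> a; rewrite /leK. Qed.

Definition h := (r %/ 2)%N.
Definition f i := nth i s0 ((index i s0 + h) %% r).

Lemma idx_lt i : (index i s0 < r)%N.
Proof. by rewrite -[X in (_ < X)%N]s0_size index_mem mem_s0. Qed.

Lemma r_gt0 (i : 'I_r) : (0 < r)%N.
Proof. by case: i => /= m hm; apply: leq_ltn_trans hm. Qed.

Lemma idx_f i : index (f i) s0 = ((index i s0 + h) %% r)%N.
Proof.
rewrite /f index_uniq ?s0_uniq // s0_size ltn_pmod //; exact: r_gt0 i.
Qed.

Lemma f_inj : injective f.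
Proof.
move=> i j hij.
have := congr1 (fun x => index x s0) hij; rewrite !idx_f => /eqP.
rewrite eqn_modDr !modn_small ?idx_lt // => /eqP hp.
by rewrite -(nth_index i (mem_s0 i)) hp (set_nth_default j) ?s0_size ?idx_lt // nth_index // mem_s0.
Qed.

Lemma block i a b : (a <= b)%N -> (b < r)%N ->
  (forall x, (a <= x <= b)%N -> e i (nth i s0 x)) -> (b - a + 1 <= #|[set j | e i j]|)%N.
Proof.
move=> hab hbr hx.
pose l := [seq nth i s0 x | x <- iota a (b - a + 1)].
have -> : (b - a + 1 = size l)%N by rewrite size_map size_iota.
rewrite cardE; apply: uniq_leq_size.
  rewrite map_inj_in_uniq ?iota_uniq // => x y; rewrite !mem_iota => hx' hy'.
  have hxr : (x < r)%N by move: hx'; case/andP => _; lia.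
  have hyr : (y < r)%N by move: hy'; case/andP => _; lia.
  by move/eqP; rewrite nth_uniq ?s0_uniq ?s0_size // => /eqP.
move=> y /mapP [x]; rewrite mem_iota => hx' ->.
rewrite mem_enum inE; apply: hx.
by move: hx'; case/andP => h1 h2; apply/andP; split; lia.
Qed.

Lemma f_ne i : ~~ e i (f i).
Proof.
apply/negP => hi.
pose p := index i s0; pose q := ((p + h) %% r)%N.
have hr := r_gt0 i.
have hp : (p < r)%N by apply: idx_lt.
have hq : (q < r)%N by rewrite ltn_pmod.
have ip : nth i s0 p = i by rewrite nth_index // mem_s0.
have hk : key (nth i s0 p) = key (nth i s0 q) by rewrite ip; apply: key_eq.
have qdef : q = ((p + h) %% r)%N by [].
clearbody p q.
have mono := sorted_leq_nth leK_trans leK_refl i s0_sorted.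
have inr x : (x < r)%N -> x \in [pred n | (n < size s0)%N] by rewrite inE s0_size.
have mid : forall x, (minn p q <= x <= maxn p q)%N -> e i (nth i s0 x).
  move=> x /andP [h1 h2].
  have hx : (x < r)%N by lia.
  have hm1 : (minn p q < r)%N by lia.
  have hm2 : (maxn p q < r)%N by lia.
  have k1 := mono _ _ (inr _ hm1) (inr _ hx) h1.
  have k2 := mono _ _ (inr _ hx) (inr _ hm2) h2.
  move: k1 k2; rewrite /leK.
  have [-> ->] : key (nth i s0 (minn p q)) = key i /\ key (nth i s0 (maxn p q)) = key i.
    by case: (leqP p q) => _; rewrite -hk ip; split.
  move=> k1 k2.
  have : key i = key (nth i s0 x) by apply/eqP; rewrite eqn_leq k1 k2.
  rewrite /key => /val_inj hk'.
  have h3 := keyP (nth i s0 x); rewrite -hk' in h3.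
  by apply: (e_trans (keyP i)); rewrite e_sym.
have hb := block (leq_trans (geq_minl p q) (leq_maxl p q)) (leq_trans (leqnn _) (_ : (maxn p q < r)%N)) mid.
have hc := hcard i.
have hh : (h = r %/ 2)%N by [].
have hq' : (q = p + h \/ q + r = p + h)%N.
  case: (ltnP (p + h) r) => hph.
    by left; rewrite qdef modn_small.
  right; rewrite qdef.
  have -> : (p + h = (p + h - r) + r)%N by rewrite subnK.
  rewrite modnDr modn_small; first by rewrite subnK.
  have : (h <= r)%N by rewrite hh leq_div.
  lia.
have : (maxn p q < r)%N by lia.
move=> _; lia.

Qed.

Lemma f_invol : ~~ odd r -> forall i, f (f i) = i.
Proof.
move=> hev i.
have hr := r_gt0 i.
rewrite {1}/f idx_f.
have -> : (((index i s0 + h) %% r + h) %% r = index i s0)%N.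
  rewrite modnDml -addnA.
  have -> : (h + h = r)%N.
    have := odd_double_half r; rewrite (negbTE hev) add0n -divn2 /h -addnn.
    lia.
  by rewrite modnDr modn_small ?idx_lt.
by rewrite (set_nth_default i) ?s0_size ?idx_lt // nth_index // mem_s0.
Qed.

Lemma derange_exists : exists s : {perm 'I_r},
  (forall i, ~~ e i (s i)) /\ (~~ odd r -> (s * s = 1)%g).
Proof.
exists (perm f_inj); split.
  by move=> i; rewrite permE f_ne.
by move=> hev; apply/permP => i; rewrite permM !permE f_invol.
Qed.

End Comb.


Section PartB.
Variables (C : numClosedFieldType) (n r : nat).

Definition mh (dv dw : 'I_r -> nat) (F : {mpoly C[NV n r]}) :=
  forall m, m \in msupp F -> forall i,
    (\sum_j m (vidx i j) = dv i)%N /\ (\sum_j m (widx i j) = dw i)%N.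

Lemma mh0 dv dw : mh dv dw 0.
Proof. by move=> m; rewrite msupp0. Qed.

Lemma mhD dv dw p q : mh dv dw p -> mh dv dw q -> mh dv dw (p + q).
Proof. by move=> hp hq m /msuppD_le; rewrite mem_cat => /orP [/hp|/hq]. Qed.

Lemma mh_sum dv dw (I : Type) (s : seq I) (F : I -> {mpoly C[NV n r]}) :
  (forall x, mh dv dw (F x)) -> mh dv dw (\sum_(x <- s) F x).
Proof. by move=> hF; apply: big_ind => //; [exact: mh0 | exact: mhD]. Qed.

Lemma mhM dv dw dv' dw' p q : mh dv dw p -> mh dv' dw' q ->
  mh (fun i => dv i + dv' i)%N (fun i => dw i + dw' i)%N (p * q).
Proof.
move=> hp hq m /msuppM_le /allpairsP [[m1 m2] /= [h1 h2 ->]] i.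
have [a1 b1] := hp _ h1 i; have [a2 b2] := hq _ h2 i.
by split; rewrite -?a1 -?a2 -?b1 -?b2 -big_split /=; apply: eq_bigr => j _; rewrite mnmDE.
Qed.

Lemma mh1 : mh (fun _ => 0%N) (fun _ => 0%N) 1.
Proof.
move=> m; rewrite msupp1 inE => /eqP -> i.
by split; apply: big1 => j _; rewrite mnm0E.
Qed.

Lemma mh_prod (dv dw : 'I_r -> 'I_r -> nat) (F : 'I_r -> {mpoly C[NV n r]}) (s : seq 'I_r) :
  (forall x, mh (dv x) (dw x) (F x)) ->
  mh (fun i => \sum_(x <- s) dv x i)%N (fun i => \sum_(x <- s) dw x i)%N (\prod_(x <- s) F x).
Proof.
move=> hF; elim: s => [|x s ih].
  rewrite big_nil; move=> m hm i; have [h1 h2] := mh1 hm i.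
  by rewrite !big_nil.
rewrite big_cons => m hm i.
have := mhM (hF x) ih hm i.
by rewrite !big_cons.
Qed.


Lemma sum_ind (j0 : 'I_n) (c : bool) : (\sum_(j < n) (c && (j0 == j)) = c)%N.
Proof.
rewrite (bigD1 j0) //= eqxx andbT big1 ?addn0 // => j hj.
by rewrite eq_sym (negbTE hj) andbF.
Qed.

Lemma mhXX (i0 i1 : 'I_r) (j0 : 'I_n) :
  mh (fun i => (i1 == i) : nat) (fun i => (i0 == i) : nat)
     ('X_(widx i0 j0) * 'X_(vidx i1 j0)).
Proof.
move=> m; rewrite -mpolyXD msuppX inE => /eqP -> i; split.
  under eq_bigr do rewrite mnmDE !mnm1E wvidx_eq vidx_eq add0n.
  by rewrite sum_ind.
under eq_bigr do rewrite mnmDE !mnm1E vwidx_eq widx_eq addn0.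
by rewrite sum_ind.
Qed.

Definition Fs (s : {perm 'I_r}) : {mpoly C[NV n r]} :=
  \prod_(i0 < r) \sum_(j < n) 'X_(widx i0 j) * 'X_(vidx (s i0) j).

Lemma Fs_multihom s : multihom 1 (Fs s).
Proof.
have := @mh_prod (fun i0 i => (s i0 == i) : nat) (fun i0 i => (i0 == i) : nat)
  (fun i0 => \sum_(j < n) 'X_(widx i0 j) * 'X_(vidx (s i0) j)) (index_enum 'I_r).
move=> H m hm i; have [h1 h2] := H (fun x => mh_sum (fun j => @mhXX x (s x) j)) m hm i.
rewrite h1 h2; split.
  under eq_bigr do rewrite (canF_eq (permK s)).
  by rewrite (bigD1 (s^-1 i)%g) //= eqxx big1 // => k /negbTE ->.
by rewrite (bigD1 i) //= eqxx big1 // => k /negbTE ->.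
Qed.

Lemma Fs_eval s v w : (Fs s).@[env v w] = \prod_i0 (w i0 *m (v (s i0))^T) 0 0.
Proof.
rewrite /Fs rmorph_prod; apply: eq_bigr => i0 _.
rewrite rmorph_sum mxE; apply: eq_bigr => j _.
by rewrite rmorphM /= !mevalXU env_vidx env_widx mxE.
Qed.

Lemma Fs_inv s : SL_invariant (Fs s).
Proof.
move=> g dg v w; rewrite !Fs_eval; apply: eq_bigr => i0 _.
have ug : g \in unitmx by rewrite unitmxE dg unitr1.
by rewrite trmx_mul trmxK mulmxA -(mulmxA _ (invmx g)) mulVmx // mulmx1.
Qed.

Lemma Fs_point s (H : 'M[C]_n) v :
  (Fs s).@[env v (fun i => dual_pt H (v i))] = s_sigma H v s.
Proof. by rewrite Fs_eval. Qed.

Lemma ss_of_sigma (H : 'M[C]_n) (v : 'I_r -> 'rV[C]_n) s : s_sigma H v s != 0 -> semistable H v.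
Proof.
move=> hs; exists 1%N; split => //; exists (Fs s); split; first exact: Fs_multihom.
by split; [exact: Fs_inv | rewrite Fs_point].
Qed.

End PartB.




Notation cmx := Pilot.Defs.conjmx.

Section Dot.
Variables (C : numClosedFieldType) (n : nat).
Implicit Types (x z : 'rV[C]_n).

Definition dot x z : C := (x *m z^T) 0 0.

Lemma dot_mx x z : x *m z^T = (dot x z)%:M.
Proof. exact: mx11_scalar. Qed.
Lemma dotC x z : dot x z = dot z x.
Proof.
rewrite /dot; have -> : z *m x^T = (x *m z^T)^T by rewrite trmx_mul trmxK.
by rewrite [RHS]mxE.
Qed.
Lemma dotZl c x z : dot (c *: x) z = c * dot x z.
Proof. by rewrite /dot -scalemxAl mxE. Qed.
Lemma dotZr c x z : dot x (c *: z) = c * dot x z.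
Proof. by rewrite dotC dotZl dotC. Qed.
Lemma dotBl x x' z : dot (x - x') z = dot x z - dot x' z.
Proof. by rewrite /dot mulmxBl !mxE. Qed.
Lemma dotDl x x' z : dot (x + x') z = dot x z + dot x' z.
Proof. by rewrite /dot mulmxDl !mxE. Qed.
Lemma dot_conj x : x != 0 -> dot x (cmx x) != 0.
Proof.
move=> hx; rewrite /dot mxE.
apply: contra hx => /eqP h0.
have hge : forall j : 'I_n, true -> 0 <= x 0 j * (cmx x)^T j 0.
  by move=> j _; rewrite !mxE mul_conjC_ge0.
apply/eqP/rowP => j; rewrite mxE.
have := psumr_eq0P hge h0.
by move/(_ j isT); rewrite !mxE => /eqP; rewrite mul_conjC_eq0 => /eqP.
Qed.
Lemma mul11 (B : 'M[C]_1) x : B *m x = B 0 0 *: x.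
Proof. by rewrite {1}(mx11_scalar B) mul_scalar_mx. Qed.
Lemma act_rank1 x (p q : 'rV[C]_n) : x *m (p^T *m q) = dot x p *: q.
Proof. by rewrite mulmxA mul11. Qed.

End Dot.

Section Gen.
Variables (C : numClosedFieldType) (n : nat) (u a y d : 'rV[C]_n).
Hypotheses (au : dot a u = 1) (ay : dot a y = 0) (du : dot d u = 0) (dy : dot d y = 1).

Definition G (t : C) : 'M[C]_n :=
  1%:M + (t - 1) *: (u^T *m a) + (t^-1 - 1) *: (y^T *m d).
Definition Gi (t : C) : 'M[C]_n :=
  1%:M + (t^-1 - 1) *: (u^T *m a) + (t - 1) *: (y^T *m d).

Lemma GGi t : t != 0 -> G t *m Gi t = 1%:M.
Proof.
move=> ht; rewrite /G /Gi.
set A := u^T *m a; set B := y^T *m d.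
have AA : A *m A = A by rewrite /A mulmxA -(mulmxA u^T) dot_mx au mulmx1.
have AB : A *m B = 0.
  by rewrite /A /B mulmxA -(mulmxA u^T) dot_mx ay -scalemx1 scale0r mulmx0 mul0mx.
have BA : B *m A = 0.
  by rewrite /A /B mulmxA -(mulmxA y^T) dot_mx du -scalemx1 scale0r mulmx0 mul0mx.
have BB : B *m B = B by rewrite /B mulmxA -(mulmxA y^T) dot_mx dy mulmx1.
clearbody A B.
rewrite !mulmxDl !mulmxDr !mul1mx !mulmx1 -!scalemxAl -!scalemxAr !scalerA AA AB BA BB !scaler0 !addr0.
have -> : forall (a1 a2 b1 b2 : C),
  1%:M + a2 *: A + b2 *: B + (a1 *: A + (a1 * a2) *: A) + (b1 *: B + (b1 * b2) *: B)
  = 1%:M + (a1 + a2 + a1 * a2) *: A + (b1 + b2 + b1 * b2) *: B :> 'M[C]_n.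
  by move=> a1 a2 b1 b2; apply/matrixP => i j; rewrite !mxE; ring.
have -> : (t - 1 + (t^-1 - 1) + (t - 1) * (t^-1 - 1)) = 0 by field.
have -> : (t^-1 - 1 + (t - 1) + (t^-1 - 1) * (t - 1)) = 0 by field.
by rewrite !scale0r !addr0.
Qed.


Lemma actG t x : x *m (G t)^T = x + (t - 1) *: (dot x a *: u) + (t^-1 - 1) *: (dot x d *: y).
Proof.
rewrite /G !linearD !linearZ /= trmx1 (trmx_mul u^T a) (trmx_mul y^T d) !trmxK.
by rewrite mulmx1 !act_rank1; apply/rowP => j; rewrite !mxE; ring.
Qed.

Lemma actGi t z : z *m Gi t = z + (t^-1 - 1) *: (dot z u *: a) + (t - 1) *: (dot z y *: d).
Proof. by rewrite /Gi !mulmxDr mulmx1 -!scalemxAr !act_rank1. Qed.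

Lemma G_u t : u *m (G t)^T = t *: u.
Proof.
rewrite actG dotC au [dot u d]dotC du scale0r scaler0 addr0 scale1r.
by rewrite -{1}[u]scale1r -scalerDl; congr (_ *: _); ring.
Qed.

Lemma d_Gi t : d *m Gi t = t *: d.
Proof.
rewrite actGi du dy scale0r scaler0 addr0 scale1r.
by rewrite -{1}[d]scale1r -scalerDl; congr (_ *: _); ring.
Qed.

Lemma polyV t x : t != 0 -> t *: (x *m (G t)^T) =
  dot x d *: y + t *: (x - dot x a *: u - dot x d *: y) + t^+2 *: (dot x a *: u).
Proof. move=> ht; rewrite actG; apply/rowP => j; rewrite !mxE; field; exact: ht. Qed.

Lemma polyW t z : t != 0 -> t *: (z *m Gi t) =
  dot z u *: a + t *: (z - dot z u *: a - dot z y *: d) + t^+2 *: (dot z y *: d).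
Proof. move=> ht; rewrite actGi; apply/rowP => j; rewrite !mxE; field; exact: ht. Qed.

End Gen.

Section Destab.
Variables (C : numClosedFieldType) (n r : nat) (H : 'M[C]_n) (u : 'rV[C]_n).
Hypotheses (hH : hermitian_sig_n1_1 H) (n_gt0 : (0 < n)%N) (u0 : u != 0)
  (iu : isotropic H u).

Lemma H_unit : H \in unitmx.
Proof.
case: hH => _ [P uP hP].
have : (cmx P)^T *m H *m P \in unitmx.
  rewrite hP unitmxE det_diag unitfE; apply/prodf_neq0 => i _; rewrite mxE.
  by case: ifP => _; rewrite ?oppr_eq0 oner_eq0.
by rewrite !unitmx_mul => /andP [/andP [_ ->] _].
Qed.

Definition dd := dual_pt H u.
Lemma dd_neq0 : dd != 0.
Proof.
apply: contra u0 => /eqP hd.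
have : cmx u = 0.
  by rewrite -[cmx u]mulmx1 -(mulmxV H_unit) mulmxA -/(dual_pt H u) -/dd hd mul0mx.
by move/eqP; rewrite conjmx_eq0.
Qed.
Lemma du : dot dd u = 0. Proof. exact: iu. Qed.
Definition yy := (dot dd (cmx dd))^-1 *: cmx dd.
Lemma dy : dot dd yy = 1.
Proof. by rewrite dotZr mulVf // dot_conj // dd_neq0. Qed.
Definition a0 := (dot u (cmx u))^-1 *: cmx u.
Definition aa := a0 - dot a0 yy *: dd.
Lemma au : dot aa u = 1.
Proof. by rewrite /aa dotBl dotZl du mulr0 subr0 /a0 dotZl [dot (cmx u) u]dotC mulVf // dot_conj. Qed.
Lemma ay : dot aa yy = 0.
Proof. by rewrite /aa dotBl dotZl dy mulr1 subrr. Qed.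


Lemma poly_zero (p : {poly C}) : (forall t, t != 0 -> p.[t] = 0) -> p = 0.
Proof.
move=> hp; apply/eqP; apply: contraT => p0.
have := max_poly_roots p0 (rs := [seq (i.+1)%:R | i <- iota 0 (size p)]).
rewrite size_map size_iota ltnn; apply.
  apply/allP => x /mapP [i _ ->]; rewrite /root hp //.
  by rewrite pnatr_eq0.
rewrite map_inj_uniq ?iota_uniq // => i j /eqP.
by rewrite eqr_nat eqSS => /eqP.
Qed.

Lemma destab k (F : {mpoly C[NV n r]}) (v : 'I_r -> 'rV[C]_n) :
  (0 < k)%N -> multihom k F -> SL_invariant F ->
  (r < 2 * #|[set i | (v i == u)%MS]|)%N ->
  F.@[env v (fun i => dual_pt H (v i))] = 0.
Proof.
move=> k_gt0 hF hI hm.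
pose w i := dual_pt H (v i).
rewrite -/w.
pose cls i := (v i == u)%MS.
pose GG := G u aa yy dd; pose GI := Gi u aa yy dd.
have clsV : forall i t, cls i -> v i *m (GG t)^T = t *: v i.
  move=> i t /andP [/submxP [D hD] _].
  by rewrite hD mul11 -scalemxAl /GG (@G_u _ _ u aa yy dd au du) !scalerA mulrC.
have clsW : forall i t, cls i -> w i *m GI t = t *: w i.
  move=> i t /andP [/submxP [D hD] _].
  rewrite /w /dual_pt hD mul11 conjmxZ -!scalemxAl.
  have -> : cmx u *m H = dd by [].
  by rewrite /GI (@d_Gi _ _ u aa yy dd du dy) !scalerA mulrC.
pose V0 i := if cls i then v i else dot (v i) dd *: yy.
pose V1 i := if cls i then 0 else v i - dot (v i) aa *: u - dot (v i) dd *: yy.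
pose V2 i := if cls i then 0 else dot (v i) aa *: u.
pose W0 i := if cls i then w i else dot (w i) u *: aa.
pose W1 i := if cls i then 0 else w i - dot (w i) u *: aa - dot (w i) yy *: dd.
pose W2 i := if cls i then 0 else dot (w i) yy *: dd.
pose lam (t : C) (i : 'I_r) : C := if cls i then t^+2 else 1.
have F1v : forall t i, t != 0 ->
    t *: (v i *m (GG t)^T) = lam t i *: (V0 i + t *: V1 i + t^+2 *: V2 i).
  move=> t i ht; rewrite /lam /V0 /V1 /V2; case: ifP => hc.
    by rewrite clsV // !scaler0 !addr0 scalerA expr2.
  by rewrite scale1r /GG polyV.
have F1w : forall t i, t != 0 ->
    t *: (w i *m GI t) = lam t i *: (W0 i + t *: W1 i + t^+2 *: W2 i).
  move=> t i ht; rewrite /lam /W0 /W1 /W2; case: ifP => hc.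
    by rewrite clsW // !scaler0 !addr0 scalerA expr2.
  by rewrite scale1r /GI polyW.
have hlam : forall t, \prod_i (lam t i * lam t i) ^+ k = t ^+ (2 * k * (2 * #|[set i | cls i]|)).
  move=> t.
  rewrite (eq_bigr (fun i => if cls i then t ^+ (4 * k) else 1)); last first.
    move=> i _; rewrite /lam; case: ifP => _; last by rewrite mulr1 expr1n.
    by rewrite -exprD -exprM.
  rewrite -big_mkcond prodr_const cardsE -exprM; congr (_ ^+ _); lia.
clearbody V0 V1 V2 W0 W1 W2.
pose vR t i := V0 i + t *: V1 i + t^+2 *: V2 i.
pose wR t i := W0 i + t *: W1 i + t^+2 *: W2 i.
pose Ep kk : {poly C} := (env V0 W0 kk)%:P + env V1 W1 kk *: 'X + env V2 W2 kk *: 'X^2.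
pose rho := \sum_(m <- msupp F) F@_m *: \prod_kk (Ep kk) ^+ m kk.
have Ep_eval : forall t kk, (Ep kk).[t] = env (vR t) (wR t) kk.
  move=> t kk; rewrite /Ep !hornerD hornerC !hornerZ hornerX hornerXn.
  case: (idxP kk) => [[i [j ->]]|[i [j ->]]].
    by rewrite !env_vidx /vR !mxE; ring.
  by rewrite !env_widx /wR !mxE; ring.
have rho_eval : forall t, rho.[t] = F.@[env (vR t) (wR t)].
  move=> t; rewrite /rho mevalE horner_sum; apply: eq_bigr => m _.
  rewrite hornerZ horner_prod; congr (_ * _); apply: eq_bigr => kk _.
  by rewrite horner_exp Ep_eval.
set X := F.@[env v w].
set m := #|[set i | cls i]|.
have key : forall t, t != 0 -> X * t ^+ (2 * k * r) = rho.[t] * t ^+ (2 * k * (2 * m)).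
  move=> t ht.
  have E1 := @GL_inv _ _ _ k F hF hI n_gt0 _ _ (@GGi _ _ u aa yy dd au ay du dy t ht) v w.
  have E2 := @scale_hom _ _ _ k F hF (fun _ => t) (fun _ => t)
    (fun i => v i *m (GG t)^T) (fun i => w i *m GI t)
    (fun i => t *: (v i *m (GG t)^T)) (fun i => t *: (w i *m GI t))
    (fun i => erefl) (fun i => erefl).
  have E3 := @scale_hom _ _ _ k F hF (lam t) (lam t) (vR t) (wR t)
    (fun i => t *: (v i *m (GG t)^T)) (fun i => t *: (w i *m GI t))
    (fun i => F1v t i ht) (fun i => F1w t i ht).
  rewrite E2 E1 hlam -rho_eval prodr_const card_ord in E3.
  have -> : t ^+ (2 * k * r) = (t * t) ^+ k ^+ r by rewrite -expr2 -!exprM mulnA.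
  by rewrite /X /m mulrC E3 mulrC.
have hm' : (r < 2 * m)%N := hm.
pose e := (2 * k * (2 * m) - 2 * k * r)%N.
have he : (0 < e)%N by rewrite /e; nia.
have hE : (2 * k * (2 * m) = 2 * k * r + e)%N by rewrite /e; nia.
have key2 : forall t, t != 0 -> (rho * 'X^e - X%:P).[t] = 0.
  move=> t ht.
  have h2 : (X - rho.[t] * t ^+ e) * t ^+ (2 * k * r) = 0.
    by rewrite mulrBl key // hE exprD; ring.
  move/eqP: h2; rewrite mulf_eq0 expf_eq0 (negbTE ht) andbF orbF subr_eq0 => /eqP hX.
  by rewrite hornerD hornerN hornerM hornerXn hornerC hX subrr.
have := congr1 (fun p : {poly C} => p`_0) (poly_zero key2).
rewrite /= coefB coefC coefMXn he coef0 /= sub0r => /eqP.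
by rewrite oppr_eq0 => /eqP.
Qed.

End Destab.

Unset Implicit Arguments.
Set Strict Implicit.

Theorem proposition4p15 (C : numClosedFieldType) (n r : nat)
    (H : 'M[C]_n) (v : 'I_r -> 'rV[C]_n) :
  (3 <= n)%N -> (3 <= r)%N -> hermitian_sig_n1_1 H ->
  (forall i, v i != 0 /\ isotropic H (v i)) ->
  (semistable H v <->
     (forall w : 'rV[C]_n, w != 0 -> isotropic H w ->
        (2 * #|[set i : 'I_r | (v i == w)%MS]| <= r)%N))
  /\
  (~~ odd r ->
     (semistable H v <->
        exists s : {perm 'I_r},
          derangement s /\ #[s]%g = 2%N /\ s_sigma H v s != 0)).
Proof.
move=> hn hr hH hv.
have n_gt0 : (0 < n)%N by lia.
pose e := fun i j : 'I_r => (v i == v j)%MS.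
have e_refl : reflexive e by move=> i; rewrite /e /= submx_refl.
have e_sym : ssrbool.symmetric e by move=> i j; rewrite /e /= andbC.
have e_trans : transitive e.
  move=> j i k /andP [h1 h2] /andP [h3 h4]; apply/andP; split.
    exact: submx_trans h1 h3.
  exact: submx_trans h4 h2.
have hne : forall i j, ~~ e i j -> hform H (v i) (v j) != 0.
  move=> i j; apply: contra => /eqP h0.
  have [hi0 hii] := hv i; have [hj0 hjj] := hv j.
  have [c c0 hc] := iso_orth n_gt0 hH hi0 hj0 hii hjj h0.
  rewrite /e hc.
  by apply/eqmxP; apply: eqmx_sym; apply: eqmx_scale.
have ss_P1 : semistable H v ->
    (forall w : 'rV[C]_n, w != 0 -> isotropic H w ->
        (2 * #|[set i : 'I_r | (v i == w)%MS]| <= r)%N).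
  move=> [k [k_gt0 [F [hF [hI hF0]]]]] w w0 iw.
  rewrite leqNgt; apply/negP => hm.
  by move: hF0; rewrite (destab hH n_gt0 w0 iw k_gt0 hF hI hm) eqxx.
have P1_der : (forall w : 'rV[C]_n, w != 0 -> isotropic H w ->
        (2 * #|[set i : 'I_r | (v i == w)%MS]| <= r)%N) ->
    exists s : {perm 'I_r}, (forall i, ~~ e i (s i)) /\ (~~ odd r -> (s * s = 1)%g).
  move=> hP; apply: (derange_exists e_refl e_sym e_trans) => i.
  have [hi0 hii] := hv i.
  have := hP _ hi0 hii.
  congr (2 * _ <= r)%N; apply: eq_card => j; rewrite !inE.
  by rewrite e_sym.
have sig_ne : forall s : {perm 'I_r}, (forall i, ~~ e i (s i)) -> s_sigma H v s != 0.
  move=> s hs; apply/prodf_neq0 => i _; exact: hne.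
split.
  split; first exact: ss_P1.
  by move=> /P1_der [s [hs _]]; apply: (ss_of_sigma (s := s)); apply: sig_ne.
move=> hev; split; last first.
  by move=> [s [_ [_ hs]]]; apply: ss_of_sigma hs.
move=> /ss_P1 /P1_der [s [hs hss]].
exists s; split.
  move=> i; apply/eqP => hsi; move: (hs i); by rewrite hsi e_refl.
split; last exact: sig_ne.
have s2 : (s ^+ 2 = 1)%g by rewrite expgS expg1 hss.
have hd : (#[s]%g %| 2)%N by rewrite order_dvdn s2.
have hn1 : #[s]%g != 1%N.
  rewrite order_eq1; apply/eqP => s1.
  have r0 : (0 < r)%N by lia.
  have := hs (Ordinal r0); by rewrite s1 perm1 e_refl.
have := dvdn_leq (isT : (0 < 2)%N) hd.
have := order_gt0 s.
move: hn1; lia.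
Qed.
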